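(* Let $C=\mathtt{while}(\varphi)\{C_{\mathrm{body}}\}[I]$ be a $\mathsf{pGCL}$ loop with loop-free body $C_{\mathrm{body}}$, and let $f\in\mathbb{E}$. If (1) $[\varphi]\cdot\mathrm{awp}[\![C_{\mathrm{body}}]\!](I)+[\neg\varphi]\cdot f\ge I$, and (2) $C$ is dPAST, and (3) $C$ is suitable for optional stopping w.r.t. $f$, then $\mathrm{awp}[\![C]\!](f)\ge I$.
   Context: States: fix a countably infinite set of program variables with values in $\mathbb{Q}_{\ge 0}$; a state is a map $\sigma$ from variables to $\mathbb{Q}_{\ge0}$ which is $0$ for all but finitely many variables; $\mathsf{States}$ is the set of states. A predicate is a map $\varphi:\mathsf{States}\to\{\mathsf{true},\mathsf{false}\}$. Expectations: $\mathbb{E}$ is the set of maps $\mathsf{States}\to[0,\infty]$, ordered pointwise ($\le,\ge$); $+,\cdot$ pointwise with $0\cdot\infty=0$; $\sqcap,\sqcup$ pointwise min/max; $[\varphi]$ Iverson bracket; $(\varphi\to g)(\sigma)=g(\sigma)$ if $\sigma\models\varphi$, else $\infty$; $f[x/E](\sigma)=f(\sigma[x\mapsto E(\sigma)])$. Programs of $\mathsf{pGCL}$: $C ::= \mathtt{skip} \mid x:=E \mid C;C \mid \mathtt{if}\ \varphi_1\to C\ \square\ \varphi_2\to C \mid \{C\}[p]\{C\} \mid \mathtt{while}(\varphi)\{C\}[I]$, where $E:\mathsf{States}\to\mathbb{Q}_{\ge0}$, $p:\mathsf{States}\to[0,1]$, in every guarded choice $\varphi_1\vee\varphi_2$ is valid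 (when both hold the choice is nondeterministic), and every loop carries an invariant annotation $I\in\mathbb{E}$. Weakest preexpectations for $\mathcal{T}\in\{\mathrm{dwp},\mathrm{awp}\}$: $\mathcal{T}[\![\mathtt{skip}]\!](f)=f$; $\mathcal{T}[\![x:=E]\!](f)=f[x/E]$; $\mathcal{T}[\![C_1;C_2]\!](f)=\mathcal{T}[\![C_1]\!](\mathcal{T}[\![C_2]\!](f))$; $\mathrm{dwp}$ of a guarded choice: $(\varphi_1\to\mathrm{dwp}[\![C_1]\!](f))\sqcap(\varphi_2\to\mathrm{dwp}[\![C_2]\!](f))$; $\mathrm{awp}$ of a guarded choice: $[\varphi_1]\cdot\mathrm{awp}[\![C_1]\!](f)\sqcup[\varphi_2]\cdot\mathrm{awp}[\![C_2]\!](f)$; $\mathcal{T}[\![\{C_1\}[p]\{C_2\}]\!](f)=p\cdot\mathcal{T}[\![C_1]\!](f)+(1-p)\cdot\mathcal{T}[\![C_2]\!](f)$; loops: least fixpoint of $g\mapsto[\neg\varphi]\cdot f+[\varphi]\cdot\mathcal{T}[\![C']\!](g)$. $C$ is dPAST (positively demonically almost-surely terminating) if its expected runtime (in the sense of the expected-runtime calculus of Kaminski et al., resolving nondeterminism in the worst case) is finite for all initial states. A loop $\mathtt{while}(\varphi)\{C_{\mathrm{body}}\}[I]$ is suitable for optional stopping w.r.t. $f$ if (i) $I=[\varphi]\cdot I'+[\neg\varphi]\cdot f$ for some $I'\in\mathbb{E}$, (ii) $f$, $I$ and $[\varphi]\cdot\mathrm{awp}[\![C_{\mathrm{body}}]\!](I)+[\neg\varphi]\cdot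 f$ are all pointwise $<\infty$, and (iii) there is $b\in\mathbb{R}_{\ge0}$ such that for all states $\sigma$, $([\varphi]\cdot\mathrm{awp}[\![C_{\mathrm{body}}]\!](\lambda\tau.|I(\tau)-I(\sigma)|))(\sigma)\le b$. *)

(* Defs.v *)
From HB Require Import structures.
From mathcomp Require Import all_boot all_order all_algebra.
From mathcomp Require Import boolp classical_sets reals ereal constructive_ereal.
Set Implicit Arguments. Unset Strict Implicit. Unset Printing Implicit Defensive.
Import Order.TTheory GRing.Theory Num.Theory.
Local Open Scope ring_scope.
Local Open Scope classical_set_scope.

Record pstate := PState {
  sval_ : nat -> rat;
  sval_ge0 : forall x, 0 <= sval_ x;
  sval_fin : exists N, forall x, (N <= x)%N -> sval_ x = 0 }.

Definition qnn := {q : rat | 0 <= q}.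

Lemma upd_ge0 (s : pstate) (x : nat) (q : qnn) (y : nat) :
  0 <= (if y == x then proj1_sig q else sval_ s y).
Proof. case: (y == x); [exact: (proj2_sig q) | exact: sval_ge0]. Qed.

Lemma upd_fin (s : pstate) (x : nat) (q : qnn) :
  exists N, forall y, (N <= y)%N -> (if y == x then proj1_sig q else sval_ s y) = 0.
Proof.
case: (sval_fin s) => N HN; exists (maxn N x.+1) => y Hy.
have Hx : (y == x) = false.
  apply/negbTE; apply/negP => /eqP Hyx; move: Hy; rewrite Hyx geq_max ltnn andbF //.
rewrite Hx; apply: HN; exact: leq_trans (leq_maxl _ _) Hy.
Qed.

Definition upd (s : pstate) (x : nat) (q : qnn) : pstate :=
  PState (upd_ge0 s x q) (upd_fin s x q).

Definition pred_ := pstate -> bool.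

Section PGCL.
Context (R : realType).
Local Open Scope ereal_scope.

(* expectations: maps States -> [0, oo] (non-negativity imposed where needed) *)
Definition Exp := pstate -> \bar R.

Definition iv (b : bool) : \bar R := if b then 1 else 0.

Inductive prog :=
| Skip
| Assign of nat & (pstate -> qnn)
| Seq of prog & prog
| GChoice of pred_ & prog & pred_ & prog   (* if phi1 -> C1 [] phi2 -> C2 *)
| PChoice of prog & (pstate -> {r : R | (0 <= r <= 1)%R}) & prog  (* {C1}[p]{C2} *)
| While of pred_ & prog & Exp.             (* while(phi){C}[I] *)

Fixpoint wf (C : prog) : Prop :=
  match C with
  | Skip | Assign _ _ => True
  | Seq C1 C2 => wf C1 /\ wf C2
  | GChoice p1 C1 p2 C2 => (forall s, p1 s || p2 s) /\ wf C1 /\ wf C2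
  | PChoice C1 _ C2 => wf C1 /\ wf C2
  | While _ Cb Inv => (forall s, 0 <= Inv s) /\ wf Cb
  end.

Fixpoint loopfree (C : prog) : Prop :=
  match C with
  | Skip | Assign _ _ => True
  | Seq C1 C2 | GChoice _ C1 _ C2 | PChoice C1 _ C2 => loopfree C1 /\ loopfree C2
  | While _ _ _ => False
  end.

(* least fixpoint in the complete lattice of expectations (Knaster-Tarski):
   pointwise infimum of all pre-fixpoints *)
Definition lfp (Phi : Exp -> Exp) : Exp := fun s =>
  ereal_inf [set g s | g in [set g : Exp | (forall t, 0 <= g t) /\ (forall t, Phi g t <= g t)]].

Fixpoint awp (C : prog) (f : Exp) : Exp :=
  match C with
  | Skip => f
  | Assign x e => fun s => f (upd s x (e s))
  | Seq C1 C2 => awp C1 (awp C2 f)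
  | GChoice p1 C1 p2 C2 => fun s =>
      maxe (iv (p1 s) * awp C1 f s) (iv (p2 s) * awp C2 f s)
  | PChoice C1 p C2 => fun s =>
      (proj1_sig (p s))%:E * awp C1 f s + (1 - proj1_sig (p s))%:E * awp C2 f s
  | While phi Cb _ =>
      lfp (fun g s => iv (~~ phi s) * f s + iv (phi s) * awp Cb g s)
  end.

(* expected runtime calculus (Kaminski et al.), nondeterminism resolved in the
   worst case (maximum) *)
Fixpoint ert (C : prog) (t : Exp) : Exp :=
  match C with
  | Skip => fun s => 1 + t s
  | Assign x e => fun s => 1 + t (upd s x (e s))
  | Seq C1 C2 => ert C1 (ert C2 t)
  | GChoice p1 C1 p2 C2 => fun s =>
      1 + maxe (iv (p1 s) * ert C1 t s) (iv (p2 s) * ert C2 t s)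
  | PChoice C1 p C2 => fun s =>
      1 + ((proj1_sig (p s))%:E * ert C1 t s + (1 - proj1_sig (p s))%:E * ert C2 t s)
  | While phi Cb _ =>
      lfp (fun g s => 1 + (iv (~~ phi s) * t s + iv (phi s) * ert Cb g s))
  end.

Definition dPAST (C : prog) : Prop := forall s, ert C (fun _ => 0) s < +oo.

Definition suitable (phi : pred_) (Cb : prog) (I f : Exp) : Prop :=
  [/\ (exists I' : Exp, (forall s, 0 <= I' s) /\
          forall s, I s = iv (phi s) * I' s + iv (~~ phi s) * f s),
      (forall s, f s < +oo) /\ (forall s, I s < +oo) /\
      (forall s, iv (phi s) * awp Cb I s + iv (~~ phi s) * f s < +oo) &
      exists b : R, (0 <= b)%R /\
        forall s, iv (phi s) * awp Cb (fun t => `|I t - I s|) s <= b%:E].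

End PGCL.
Arguments Skip {R}.

(* Main.v *)
Require Import Defs.
From mathcomp Require Import all_boot all_order all_algebra.
From mathcomp Require Import boolp classical_sets reals ereal constructive_ereal.
Local Open Scope ring_scope.
Local Open Scope ereal_scope.
Import Order.TTheory GRing.Theory Num.Theory.
Section Aux.
Variable R : realType.
Implicit Types (C : prog R) (h : Exp R).

Lemma iv_ge0 b : 0 <= iv R b. Proof. by case: b => /=. Qed.

Lemma p_ge0 (p : {r : R | (0 <= r <= 1)%R}) : 0 <= (proj1_sig p)%:E.
Proof. by case: p => r /= /andP[]; rewrite lee_fin. Qed.
Lemma q_ge0 (p : {r : R | (0 <= r <= 1)%R}) : 0 <= (1 - proj1_sig p)%:E.
Proof. by case: p => r /= /andP[_]; rewrite lee_fin subr_ge0. Qed.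

Lemma max_ge0 (x y : \bar R) : 0 <= x -> 0 <= maxe x y.
Proof. by move=> hx; rewrite le_max hx. Qed.

Lemma awp_ge0 C h : loopfree C -> (forall t, 0 <= h t) -> forall t, 0 <= awp C h t.
Proof.
elim: C h => [|x e|C1 IH1 C2 IH2|p1 C1 IH1 p2 C2 IH2|C1 IH1 p C2 IH2|phi Cb IH Inv] h /= lf hh t //.
- by case: lf => l1 l2; apply: IH1 => // u; apply: IH2.
- by case: lf => l1 l2; apply: max_ge0; apply: mule_ge0; [exact: iv_ge0|exact: IH1].
- case: lf => l1 l2; apply: adde_ge0; apply: mule_ge0;
   [exact: p_ge0|exact: IH1|exact: q_ge0|exact: IH2].
Qed.

Lemma ert_ge0 C h : loopfree C -> (forall t, 0 <= h t) -> forall t, 0 <= ert C h t.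
Proof.
elim: C h => [|x e|C1 IH1 C2 IH2|p1 C1 IH1 p2 C2 IH2|C1 IH1 p C2 IH2|phi Cb IH Inv] h /= lf hh t //.
- by apply: adde_ge0.
- by apply: adde_ge0.
- by case: lf => l1 l2; apply: IH1 => // u; apply: IH2.
- case: lf => l1 l2; apply: adde_ge0 => //; apply: max_ge0; apply: mule_ge0; [exact: iv_ge0|exact: IH1].
- case: lf => l1 l2; apply: adde_ge0 => //; apply: adde_ge0; apply: mule_ge0;
   [exact: p_ge0|exact: IH1|exact: q_ge0|exact: IH2].
Qed.

Lemma awp_mono C h1 h2 : loopfree C -> (forall t, 0 <= h1 t) -> (forall t, h1 t <= h2 t) ->
  forall t, awp C h1 t <= awp C h2 t.
Proof.
elim: C h1 h2 => [|x e|C1 IH1 C2 IH2|p1 C1 IH1 p2 C2 IH2|C1 IH1 p C2 IH2|phi Cb IH Inv] h1 h2 /= lf hh hle t //.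
- case: lf => l1 l2; apply: IH1 => //; [exact: awp_ge0|exact: IH2].
- case: lf => l1 l2; apply: le_max2; apply: lee_pmul => //;
   by [exact: iv_ge0|exact: awp_ge0|apply: IH1|apply: IH2].
- case: lf => l1 l2; apply: leeD; apply: lee_pmul => //;
   by [exact: p_ge0|exact: q_ge0|exact: awp_ge0|apply: IH1|apply: IH2].
Qed.

Lemma ert_mono C h1 h2 : loopfree C -> (forall t, 0 <= h1 t) -> (forall t, h1 t <= h2 t) ->
  forall t, ert C h1 t <= ert C h2 t.
Proof.
elim: C h1 h2 => [|x e|C1 IH1 C2 IH2|p1 C1 IH1 p2 C2 IH2|C1 IH1 p C2 IH2|phi Cb IH Inv] h1 h2 /= lf hh hle t //.
- by apply: leeD.
- by apply: leeD.
- case: lf => l1 l2; apply: IH1 => //; [exact: ert_ge0|exact: IH2].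
- case: lf => l1 l2; apply: leeD => //; apply: le_max2; apply: lee_pmul => //;
   by [exact: iv_ge0|exact: ert_ge0|apply: IH1|apply: IH2].
- case: lf => l1 l2; apply: leeD => //; apply: leeD; apply: lee_pmul => //;
   by [exact: p_ge0|exact: q_ge0|exact: ert_ge0|apply: IH1|apply: IH2].
Qed.

Lemma le_addl1 (x : \bar R) : 0 <= x -> x <= 1 + x.
Proof. by move=> hx; rewrite leeDr. Qed.

Lemma le_add1 (x y : \bar R) : x <= y -> 0 <= y -> x <= 1 + y.
Proof. by move=> h1 h2; apply: (le_trans h1); apply: le_addl1. Qed.

Lemma awp_le_ert C h : loopfree C -> (forall t, 0 <= h t) -> forall t, awp C h t <= ert C h t.
Proof.
elim: C h => [|x e|C1 IH1 C2 IH2|p1 C1 IH1 p2 C2 IH2|C1 IH1 p C2 IH2|phi Cb IH Inv] h /= lf hh t //.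
- exact: le_addl1.
- exact: le_addl1.
- case: lf => l1 l2.
  have h0 : forall u, 0 <= awp C2 h u by exact: awp_ge0.
  move/le_trans: (IH1 _ l1 h0 t); apply.
  exact: (ert_mono _ _ _ l1 h0 (IH2 _ l2 hh)).
- case: lf => l1 l2; apply: le_add1; last first.
    by apply: max_ge0; apply: mule_ge0; [exact: iv_ge0|exact: ert_ge0].
  apply: le_max2; apply: lee_pmul => //;
   by [exact: iv_ge0|exact: awp_ge0|apply: IH1|apply: IH2].
- case: lf => l1 l2; apply: le_add1; last first.
    by apply: adde_ge0; apply: mule_ge0; by [exact: p_ge0|exact: q_ge0|exact: ert_ge0].
  apply: leeD; apply: lee_pmul => //;
   by [exact: p_ge0|exact: q_ge0|exact: awp_ge0|apply: IH1|apply: IH2].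
Qed.

End Aux.
Section Res.
Variable R : realType.
Implicit Types (C : prog R) (h : Exp R) (d : seq (R * pstate)).

Definition wsum d h : \bar R := \sum_(x <- d) (x.1)%:E * h x.2.
Definition nonnegw d := all (fun x => (0 <= x.1)%R) d.

Lemma esum_le_all {T} (p : pred T) (s : seq T) (F G : T -> \bar R) :
  all p s -> (forall x, p x -> F x <= G x) -> \sum_(x <- s) F x <= \sum_(x <- s) G x.
Proof.
elim: s => [|a s IH] /=; first by rewrite !big_nil.
move=> /andP[pa ps] hFG; rewrite !big_cons; apply: leeD; [exact: hFG|exact: IH].
Qed.

Lemma esum_eq_all {T} (p : pred T) (s : seq T) (F G : T -> \bar R) :
  all p s -> (forall x, p x -> F x = G x) -> \sum_(x <- s) F x = \sum_(x <- s) G x.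
Proof.
elim: s => [|a s IH] /=; first by rewrite !big_nil.
move=> /andP[pa ps] hFG; by rewrite !big_cons hFG // (IH ps hFG).
Qed.

Lemma rsum_le_all {T} (p : pred T) (s : seq T) (F G : T -> R) :
  all p s -> (forall x, p x -> F x <= G x)%R -> (\sum_(x <- s) F x <= \sum_(x <- s) G x)%R.
Proof.
elim: s => [|a s IH] /=; first by rewrite !big_nil.
move=> /andP[pa ps] hFG; rewrite !big_cons; apply: lerD; [exact: hFG|exact: IH].
Qed.

Lemma esum_ge0_all {T} (p : pred T) (s : seq T) (F : T -> \bar R) :
  all p s -> (forall x, p x -> 0 <= F x) -> 0 <= \sum_(x <- s) F x.
Proof.
move=> ha hF; have := @esum_le_all _ p s (fun _ => 0) F ha hF.
by rewrite big1.
Qed.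

Lemma esum_eq_nn d (F G : R * pstate -> \bar R) : nonnegw d ->
  (forall x, (0 <= x.1)%R -> F x = G x) -> \sum_(x <- d) F x = \sum_(x <- d) G x.
Proof. exact: esum_eq_all. Qed.
Lemma esum_le_nn d (F G : R * pstate -> \bar R) : nonnegw d ->
  (forall x, (0 <= x.1)%R -> F x <= G x) -> \sum_(x <- d) F x <= \sum_(x <- d) G x.
Proof. exact: esum_le_all. Qed.
Lemma rsum_le_nn d (F G : R * pstate -> R) : nonnegw d ->
  (forall x, (0 <= x.1)%R -> F x <= G x)%R -> (\sum_(x <- d) F x <= \sum_(x <- d) G x)%R.
Proof. exact: rsum_le_all. Qed.

Lemma wsum_ge0 d h : nonnegw d -> (forall t, 0 <= h t) -> 0 <= wsum d h.
Proof.
move=> hd hh; rewrite /wsum; apply: (@esum_ge0_all _ _ d _ hd) => x hx; apply: mule_ge0 => //.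
Qed.

Lemma wsum_le d h1 h2 : nonnegw d -> (forall t, 0 <= h1 t) -> (forall t, h1 t <= h2 t) ->
  wsum d h1 <= wsum d h2.
Proof.
move=> hd h0 hle; rewrite /wsum; apply: (@esum_le_all _ _ d _ _ hd) => x hx; apply: lee_pmul => //.
Qed.

Definition scalew (c : R) d := [seq (c * x.1, x.2)%R | x <- d].



Lemma wsum_scale c d h : (0 <= c)%R -> nonnegw d -> (forall t, 0 <= h t) ->
  wsum (scalew c d) h = c%:E * wsum d h.
Proof.
move=> hc; elim: d => [|a d IH] /=; first by rewrite /wsum !big_nil mule0.
move=> /andP[ha hd] hh; rewrite /wsum !big_cons /= -/(wsum _ _) IH //.
rewrite ge0_muleDr; last exact: wsum_ge0.
  by rewrite EFinM muleA.
by apply: mule_ge0 => //; rewrite lee_fin.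
Qed.

Lemma nonnegw_scale c d : (0 <= c)%R -> nonnegw d -> nonnegw (scalew c d).
Proof.
move=> hc; elim: d => [|a d IH] //= /andP[ha hd]; rewrite IH // andbT.
exact: mulr_ge0.
Qed.

Lemma sumw_scale c d : (\sum_(x <- scalew c d) x.1 = c * \sum_(x <- d) x.1)%R.
Proof. by rewrite big_map mulr_sumr. Qed.

Lemma wsum_cat d1 d2 h : wsum (d1 ++ d2) h = wsum d1 h + wsum d2 h.
Proof. by rewrite /wsum big_cat. Qed.

Lemma nonnegw_cat d1 d2 : nonnegw (d1 ++ d2) = nonnegw d1 && nonnegw d2.
Proof. by rewrite /nonnegw all_cat. Qed.

Lemma resol C : loopfree C -> wf C -> forall m, (forall t, 0 <= m t) -> forall s,
  exists d, [/\ nonnegw d, (\sum_(x <- d) x.1 <= 1)%R, wsum d m = awp C m s &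
     forall h, (forall t, 0 <= h t) -> wsum d h <= awp C h s].
Proof.
elim: C => [|x e|C1 IH1 C2 IH2|p1 C1 IH1 p2 C2 IH2|C1 IH1 p C2 IH2|phi Cb IH Inv] /= lf w m hm s //.
- exists [:: (1%R, s)]; rewrite /nonnegw /wsum /= !big_cons !big_nil /= addr0 lexx ler01.
  by split => // [|h hh]; rewrite ?big_cons ?big_nil /= mul1e adde0.
- exists [:: (1%R, upd s x (e s))]; rewrite /nonnegw /wsum /= !big_cons !big_nil /= addr0 lexx ler01.
  by split => // [|h hh]; rewrite ?big_cons ?big_nil /= mul1e adde0.
- case: lf => l1 l2; case: w => w1 w2.
  have hm2 : forall t, 0 <= awp C2 m t by exact: awp_ge0.
  have [d1 [n1 s1 e1 le1]] := IH1 l1 w1 _ hm2 s.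
  have [D hD] := choice (IH2 l2 w2 m hm).
  pose d := flatten [seq scalew x.1 (D x.2) | x <- d1].
  have key : forall h, (forall t, 0 <= h t) ->
      wsum d h = \sum_(x <- d1) x.1%:E * wsum (D x.2) h.
    move=> h hh; rewrite /wsum big_flatten big_map /=.
    apply: (@esum_eq_nn d1 (fun j => \sum_(i <- scalew j.1 (D j.2)) (i.1%:E * h i.2))) => // x hx. rewrite -/(wsum _ _) wsum_scale //.
    by case: (hD x.2).
  exists d; split.
  + rewrite /d; clear key d; elim: d1 n1 {s1 e1 le1} => [|a d1 IHd] //= /andP[ha hd].
    rewrite nonnegw_cat IHd // andbT; apply: nonnegw_scale => //.
    by case: (hD a.2).
  + rewrite /d big_flatten big_map /=.
    apply: le_trans s1; apply: (@rsum_le_nn d1 (fun x => \sum_(i <- scalew x.1 (D x.2)) i.1)%R) => // x hx.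
    rewrite sumw_scale -[leRHS]mulr1; apply: ler_wpM2l => //.
    by case: (hD x.2).
  + rewrite key // -e1 /wsum; apply: (@esum_eq_nn d1 (fun x => x.1%:E * wsum (D x.2) m)) => // x _.
    by case: (hD x.2) => _ _ ->.
  + move=> h hh; rewrite key //.
    have hh2 : forall t, 0 <= awp C2 h t by exact: awp_ge0.
    apply: (le_trans _ (le1 _ hh2)); rewrite /wsum; apply: (@esum_le_nn d1 (fun x => x.1%:E * wsum (D x.2) h)) => // x hx.
    apply: lee_pmul => //.
      by case: (hD x.2) => nd _ _ _; apply: wsum_ge0.
    by case: (hD x.2) => _ _ _ hle; exact: hle.
- case: lf => l1 l2; case: w => [hp [w1 w2]].
  have [d1 [n1 s1 e1 le1]] := IH1 l1 w1 _ hm s.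
  have [d2 [n2 s2 e2 le2]] := IH2 l2 w2 _ hm s.
  have hA : 0 <= awp C1 m s by exact: awp_ge0.
  have hB : 0 <= awp C2 m s by exact: awp_ge0.
  have hiv : forall b, 0 <= iv R b by case.
  case E1: (p1 s && (~~ p2 s || (awp C2 m s <= awp C1 m s))).
  + move/andP: E1 => [hp1 hor]; exists d1; split => //.
      rewrite e1 hp1 /= mul1e; case: (p2 s) hor => /= hor; last by rewrite mul0e max_l.
      by rewrite mul1e max_l.
    move=> h hh; apply: le_trans (le1 _ hh) _; rewrite le_max hp1 /= mul1e lexx //.
  + have hp2 : p2 s.
      move: (hp s) E1; case: (p1 s); case: (p2 s) => //.
    have hlt : ~~ p1 s || (awp C1 m s < awp C2 m s).
      by move: E1; rewrite hp2 /=; case: (p1 s) => //= /negbT; rewrite -ltNge.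
    exists d2; split => //.
      rewrite e2 hp2 /= mul1e; case: (p1 s) hlt => /= hlt; last by rewrite mul0e max_r.
      by rewrite mul1e max_r // ltW.
    move=> h hh; apply: le_trans (le2 _ hh) _; rewrite le_max hp2 /= mul1e lexx orbT //.
- case: lf => l1 l2; case: w => w1 w2.
  have [d1 [n1 s1 e1 le1]] := IH1 l1 w1 _ hm s.
  have [d2 [n2 s2 e2 le2]] := IH2 l2 w2 _ hm s.
  case: (p s) => r /andP[r0 r1] /=.
  have r0' : (0 <= 1 - r)%R by rewrite subr_ge0.
  exists (scalew r d1 ++ scalew (1 - r) d2); split.
  + by rewrite nonnegw_cat !nonnegw_scale.
  + rewrite big_cat /= !sumw_scale.
    apply: le_trans (_ : r * 1 + (1 - r) * 1 <= 1)%R; last by rewrite !mulr1 addrC subrK.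
    by apply: lerD; apply: ler_wpM2l.
  + by rewrite wsum_cat !wsum_scale // e1 e2.
  + move=> h hh; rewrite wsum_cat !wsum_scale //.
    apply: leeD; apply: lee_pmul; rewrite ?lee_fin //; try exact: wsum_ge0.
      exact: le1.
    exact: le2.
Qed.

End Res.
Arguments wsum {R}. Arguments nonnegw {R}.
Arguments wsum_le {R d h1 h2}. Arguments wsum_ge0 {R d h}.
Arguments awp_le_ert {R C h}. Arguments ert_mono {R C h1 h2}. Arguments ert_ge0 {R C h}.
Arguments awp_ge0 {R C h}. Arguments awp_mono {R C h1 h2}.
Arguments iv_ge0 {R}. Arguments esum_eq_nn {R d F G}.

Local Close Scope ereal_scope.
Set Implicit Arguments.
Section TZ.
Variable R : realType.

Definition tz (x : nat -> R) := forall e, 0 < e -> exists K, forall j, (K <= j)%N -> x j <= e.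

Lemma tz_add x y : (forall j, 0 <= x j) -> (forall j, 0 <= y j) -> tz x -> tz y -> tz (fun j => x j + y j).
Proof.
move=> hx hy tx ty e he.
have he2 : 0 < e / 2 by rewrite divr_gt0.
have [K1 h1] := tx _ he2; have [K2 h2] := ty _ he2.
exists (maxn K1 K2) => j hj.
rewrite geq_max in hj; case/andP: hj => hj1 hj2.
by rewrite (splitr e); apply: lerD; [exact: h1|exact: h2].
Qed.

Lemma tz_scale c x : 0 <= c -> tz x -> tz (fun j => c * x j).
Proof.
move=> hc tx e he.
have hc1 : 0 < c + 1 by rewrite ltr_wpDl.
have he' : 0 < e / (c + 1) by rewrite divr_gt0.
have [K hK] := tx _ he'; exists K => j hj.
have := hK _ hj; rewrite ler_pdivlMr // => h.
case: (lerP (x j) 0) => hx.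
  by apply: le_trans (ltW he); rewrite mulr_ge0_le0.
apply: le_trans h; rewrite mulrDr mulr1 mulrC lerDl; exact: ltW.
Qed.

Lemma tz_le x y : (forall j, x j <= y j) -> tz y -> tz x.
Proof. move=> hxy ty e he; have [K hK] := ty _ he; exists K => j hj; exact: le_trans (hxy j) (hK j hj). Qed.

Lemma tz0 : tz (fun _ => 0).
Proof. by move=> e he; exists 0%N => j _; exact: ltW. Qed.

Lemma tail_lemma (x : nat -> R) (B : R) : (forall k, 0 <= x k) ->
  (forall N, \sum_(0 <= k < N) x k <= B) ->
  forall e, 0 < e -> exists K, forall N, \sum_(K <= k < N) x k <= e.
Proof.
move=> hx hB e he; apply: contrapT => hne.
have hall : forall K, exists N, e < \sum_(K <= k < N) x k.
  move=> K; apply: contrapT => hK; apply: hne; exists K => N.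
  by rewrite leNgt; apply/negP => h; apply: hK; exists N.
have hj : forall j : nat, exists N, j%:R * e <= \sum_(0 <= k < N) x k.
  elim=> [|j [N hN]]; first by exists 0%N; rewrite mul0r big_geq.
  have [N' hN'] := hall N.
  have hNN : (N <= N')%N.
    rewrite leqNgt; apply/negP => hlt.
    move: hN'; rewrite big_geq; last by apply: ltnW.
    by rewrite ltNge (ltW he).
  exists N'; rewrite (big_cat_nat (leq0n N) hNN) /= -nat1r mulrDl mul1r addrC.
  by apply: lerD => //; exact: ltW.
have hB0 : 0 <= B by apply: le_trans (hB 0%N); rewrite big_geq.
pose j := Num.bound (B / e).
have [N hN] := hj j.
have : B < j%:R * e.
  by rewrite -ltr_pdivrMr // archi_boundP // divr_ge0 // ltW.
by rewrite ltNge (le_trans hN (hB N)).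
Qed.

Lemma tail_tz (x : nat -> R) (B : R) : (forall k, 0 <= x k) ->
  (forall N, \sum_(0 <= k < N) x k <= B) -> tz x.
Proof.
move=> hx hB e he; have [K hK] := @tail_lemma x B hx hB e he.
exists K => j hj; apply: le_trans (hK j.+1).
rewrite big_nat_recr //= lerDr; apply: sumr_ge0 => i _; exact: hx.
Qed.

Lemma unif_tz (y : nat -> nat -> R) : (forall k, tz (y k)) ->
  forall K e, 0 < e -> exists J, forall k, (k < K)%N -> forall j, (J <= j)%N -> y k j <= e.
Proof.
move=> hy; elim=> [|K IH] e he; first by exists 0%N.
have [J1 h1] := IH _ he; have [J2 h2] := hy K _ he.
exists (maxn J1 J2) => k hk j hj; rewrite geq_max in hj; case/andP: hj => hj1 hj2.
rewrite ltnS leq_eqVlt in hk; case/orP: hk => [/eqP ->|hk]; first exact: h2.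
exact: h1.
Qed.

Lemma sum_small (c : R) (K : nat) : 0 <= c -> c / K.+1%:R *+ K <= c.
Proof.
move=> hc; rewrite -mulr_natr -mulrA; apply: ler_piMr => //.
by rewrite mulrC ler_pdivrMr ?ltr0n // mul1r ler_nat.
Qed.
End TZ.
Arguments tz {R}.
Arguments tz0 {R}.
From mathcomp Require Import zify ring lra.

Section Chain.
Variables (R : realType) (T : Type) (phi : T -> bool) (D : T -> seq (R * T)).
Hypothesis Dnn : forall t, all (fun x => 0 <= x.1) (D t).
Hypothesis Dsum : forall t, \sum_(x <- D t) x.1 <= 1.

Definition Pop (h : T -> R) t := if phi t then \sum_(x <- D t) x.1 * h x.2 else 0.
Definition Pn n h := iter n Pop h.

Lemma rsum_le_D t (F G : R * T -> R) :
  (forall x, 0 <= x.1 -> F x <= G x) -> \sum_(x <- D t) F x <= \sum_(x <- D t) G x.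
Proof.
move: (Dnn t); elim: (D t) => [|a s IH] /=; first by rewrite !big_nil.
move=> /andP[pa ps] hFG; rewrite !big_cons; apply: lerD; [exact: hFG|exact: IH].
Qed.

Lemma P_ext h1 h2 t : (forall v, h1 v = h2 v) -> Pop h1 t = Pop h2 t.
Proof. by move=> e; rewrite /Pop; case: (phi t) => //; apply: eq_bigr => x _; rewrite e. Qed.

Lemma P_mono h1 h2 t : (forall v, h1 v <= h2 v) -> Pop h1 t <= Pop h2 t.
Proof.
move=> hle; rewrite /Pop; case: (phi t) => //; apply: rsum_le_D => x hx.
exact: ler_wpM2l.
Qed.

Lemma P_add h1 h2 t : Pop (fun v => h1 v + h2 v) t = Pop h1 t + Pop h2 t.
Proof.
rewrite /Pop; case: (phi t); last by rewrite addr0.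
by rewrite -big_split /=; apply: eq_bigr => x _; rewrite mulrDr.
Qed.

Lemma P_scale c h t : Pop (fun v => c * h v) t = c * Pop h t.
Proof.
rewrite /Pop; case: (phi t); last by rewrite mulr0.
by rewrite mulr_sumr; apply: eq_bigr => x _; rewrite mulrCA.
Qed.

Lemma P_zero t : Pop (fun _ => 0) t = 0.
Proof. by rewrite /Pop; case: (phi t) => //; rewrite big1 // => x _; rewrite mulr0. Qed.

Lemma P_ge0 h t : (forall v, 0 <= h v) -> 0 <= Pop h t.
Proof. by move=> h0; rewrite -(P_zero t); apply: P_mono. Qed.

Lemma P_one t : Pop (fun _ => 1) t <= 1.
Proof.
rewrite /Pop; case: (phi t) => //.
by rewrite (eq_bigr (fun x => x.1)) ?Dsum // => x _; rewrite mulr1.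
Qed.

Lemma P_sum n (F : nat -> T -> R) t :
  Pop (fun v => \sum_(0 <= k < n) F k v) t = \sum_(0 <= k < n) Pop (F k) t.
Proof.
elim: n => [|n IH].
  rewrite [RHS]big_geq // -[RHS](P_zero t); apply: P_ext => v; by rewrite big_geq.
rewrite big_nat_recr //= -IH -P_add; apply: P_ext => v; by rewrite big_nat_recr.
Qed.

Lemma Pn_ext n h1 h2 t : (forall v, h1 v = h2 v) -> Pn n h1 t = Pn n h2 t.
Proof.
elim: n t => [|n IH] t e /=; first exact: e.
by apply: P_ext => v; apply: IH.
Qed.

Lemma Pn_mono n h1 h2 t : (forall v, h1 v <= h2 v) -> Pn n h1 t <= Pn n h2 t.
Proof.
elim: n t => [|n IH] t e /=; first exact: e.
by apply: P_mono => v; apply: IH.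
Qed.

Lemma Pn_add n h1 h2 t : Pn n (fun v => h1 v + h2 v) t = Pn n h1 t + Pn n h2 t.
Proof.
elim: n t => [|n IH] t //=.
by rewrite -P_add; apply: P_ext => v; apply: IH.
Qed.

Lemma Pn_scale n c h t : Pn n (fun v => c * h v) t = c * Pn n h t.
Proof.
elim: n t => [|n IH] t //=.
by rewrite -P_scale; apply: P_ext => v; apply: IH.
Qed.

Lemma Pn_ge0 n h t : (forall v, 0 <= h v) -> 0 <= Pn n h t.
Proof.
elim: n t => [|n IH] t h0 /=; first exact: h0.
by apply: P_ge0 => v; apply: IH.
Qed.

Lemma PnS n h t : Pn n.+1 h t = Pn n (Pop h) t.
Proof. by rewrite /Pn iterSr. Qed.

Definition u n := Pn n (fun _ => 1).

Lemma u_ge0 n t : 0 <= u n t.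
Proof. by apply: Pn_ge0 => v; exact: ler01. Qed.

Lemma u_le1 n t : u n t <= 1.
Proof.
elim: n t => [|n IH] t /=; first by [].
apply: le_trans (P_one t); apply: P_mono; exact: IH.
Qed.

Lemma P_tz (h : nat -> T -> R) : (forall j v, 0 <= h j v) ->
  (forall v, tz (fun j => h j v)) -> forall t, tz (fun j => Pop (h j) t).
Proof.
move=> h0 ht t; rewrite /Pop; case: (phi t); last exact: tz0.
move: (Dnn t); elim: (D t) => [|a s IH] /=.
  move=> _; apply: (tz_le _ (y := fun _ => 0)) tz0 => j; by rewrite big_nil.
move=> /andP[pa ps].
have t1 : tz (fun j => a.1 * h j a.2) by exact: tz_scale pa (ht a.2).
have t2 := IH ps.
have := tz_add _ _ t1 t2.
have H1 : forall j, 0 <= a.1 * h j a.2 by move=> j; apply: mulr_ge0.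
have H2 : forall j, 0 <= \sum_(x <- s) x.1 * h j x.2.
  move=> j; move: ps; elim: s {IH t2} => [|b s IHs] /=; first by rewrite big_nil.
  move=> /andP[pb ps]; rewrite big_cons; apply: addr_ge0; [exact: mulr_ge0|exact: IHs].
move=> /(_ H1 H2); apply: tz_le => j; by rewrite big_cons.
Qed.

Lemma Pn_tz k (h : nat -> T -> R) : (forall j v, 0 <= h j v) ->
  (forall v, tz (fun j => h j v)) -> forall t, tz (fun j => Pn k (h j) t).
Proof.
elim: k h => [|k IH] h h0 ht t; first exact: ht.
apply: (tz_le _ (y := fun j => Pn k (Pop (h j)) t)).
  by move=> j; rewrite PnS.
apply: IH; last exact: P_tz.
by move=> j v; apply: P_ge0.
Qed.


Variables (m I E : T -> R) (b : R).
Hypotheses (m0 : forall t, 0 <= m t) (mP : forall t, m t <= Pop m t)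
  (mI : forall t, m t <= I t) (I0 : forall t, 0 <= I t)
  (Ib : forall t, Pop (fun v => `|I v - I t|) t <= b)
  (E0 : forall t, 0 <= E t) (EP : forall t, 1 + Pop E t <= E t).

Lemma L2 N t : \sum_(0 <= k < N) u k t + Pn N E t <= E t.
Proof.
elim: N t => [|N IH] t; first by rewrite big_geq // add0r.
rewrite big_nat_recr // PnS -addrA.
have -> : u N t + Pn N (Pop E) t = Pn N (fun v => 1 + Pop E v) t.
  by rewrite Pn_add.
apply: le_trans (IH t); apply: lerD => //; exact: Pn_mono.
Qed.

Lemma usum N t : \sum_(0 <= k < N) u k t <= E t.
Proof. apply: le_trans (L2 N t); rewrite lerDl; exact: Pn_ge0. Qed.

Lemma u_tz t : tz (fun k => u k t).
Proof. apply: (@tail_tz _ _ (E t)) => [k|N]; [exact: u_ge0|exact: usum]. Qed.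

Definition a j t := Pop (fun v => `|I v - I t| * u j v) t.
Definition aa t := Pop (fun v => `|I v - I t|) t.

Lemma a_ge0 j t : 0 <= a j t.
Proof. by apply: P_ge0 => v; apply: mulr_ge0 => //; exact: u_ge0. Qed.

Lemma aa_ge0 t : 0 <= aa t.
Proof. by apply: P_ge0 => v. Qed.

Lemma a_le j t : a j t <= aa t.
Proof. apply: P_mono => v; apply: ler_piMr => //; exact: u_le1. Qed.

Lemma a_tz t : tz (fun j => a j t).
Proof.
apply: (@P_tz (fun j v => `|I v - I t| * u j v)) => [j v|v].
  by apply: mulr_ge0 => //; exact: u_ge0.
apply: tz_scale => //; exact: u_tz.
Qed.

Lemma key n t : Pn n I t <= I t * u n t + \sum_(0 <= k < n) Pn k (a (n - k.+1)) t.
Proof.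
elim: n t => [|n IH] t.
  by rewrite big_geq //= mulr1 addr0.
have -> : Pn n.+1 I t = Pop (Pn n I) t by [].
apply: le_trans (P_mono _ _ t IH) _.
rewrite P_add P_sum big_nat_recl //= subn1 /=.
rewrite addrA; apply: lerD; last first.
  by apply: ler_sum_nat => k _; rewrite subSS.
apply: le_trans (_ : Pop (fun v => I t * u n v + `|I v - I t| * u n v) t <= _).
  apply: P_mono => v; rewrite -mulrDl; apply: ler_wpM2r; first exact: u_ge0.
  by rewrite -lerBlDl ler_norm.
by rewrite P_add P_scale.
Qed.

Lemma m_Pn n t : m t <= Pn n m t.
Proof.
elim: n t => [|n IH] t //=.
apply: le_trans (mP t) _; exact: P_mono.
Qed.

Lemma chain_main s : m s = 0.
Proof.
apply/eqP; rewrite eq_le m0 andbT; apply/ler_addgt0Pr => e he; rewrite add0r.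
have he3 : 0 < e / 3 by rewrite divr_gt0.
have hb0 : 0 <= b by apply: le_trans (Ib s); exact: aa_ge0.
have [K hK] : exists K, forall N, \sum_(K <= k < N) Pn k aa s <= e / 3.
  apply: (@tail_lemma _ _ (b * E s)) => // [k|N]; first by apply: Pn_ge0 => v; exact: aa_ge0.
  apply: le_trans (_ : \sum_(0 <= k < N) b * u k s <= _).
    apply: ler_sum_nat => k _; rewrite /u -Pn_scale; apply: Pn_mono => v.
    by rewrite mulr1; exact: Ib.
  apply: le_trans (_ : b * \sum_(0 <= k < N) u k s <= _); first by rewrite mulr_sumr.
  by apply: ler_wpM2l => //; exact: usum.
have hK1 : 0 < (K.+1)%:R :> R by rewrite ltr0n.
have he' : 0 < e / 3 / (K.+1)%:R by rewrite divr_gt0.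
have [J hJ] := unif_tz (fun k j => Pn k (a j) s)
   (fun k => Pn_tz k a a_ge0 a_tz s) K _ he'.
have [N0 hN0] := tz_scale (I s) (I0 s) (u_tz s) _ he3.
pose n := (K + J + N0).+1.
apply: le_trans (m_Pn n s) _.
apply: le_trans (Pn_mono n _ _ s mI) _.
apply: le_trans (key n s) _.
have -> : e = e / 3 + (e / 3 + e / 3) by field.
apply: lerD; first by apply: hN0; rewrite /n; lia.
have hKn : (K <= n)%N by rewrite /n; lia.
rewrite (big_cat_nat (leq0n K) hKn) /=; apply: lerD.
  apply: le_trans (_ : \sum_(0 <= k < K) (e / 3 / (K.+1)%:R) <= _).
    apply: ler_sum_nat => k /andP[_ hk]; apply: hJ => //; rewrite /n; lia.
  rewrite sumr_const_nat subn0; apply: sum_small; exact: ltW.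
apply: le_trans (hK n); apply: ler_sum_nat => k _; apply: Pn_mono => v; exact: a_le.
Qed.

End Chain.

Section Glue.
Variable R : realType.
Local Open Scope ereal_scope.

Lemma lfp_ge0 (Phi : Exp R -> Exp R) t : 0 <= lfp Phi t.
Proof. by apply/ereal_infP => y [g [g0 _] <-]; exact: g0. Qed.

Lemma lfp_pre (Phi : Exp R -> Exp R) :
  (forall g1 g2, (forall t, 0 <= g1 t) -> (forall t, g1 t <= g2 t) -> forall t, Phi g1 t <= Phi g2 t) ->
  forall t, Phi (lfp Phi) t <= lfp Phi t.
Proof.
move=> mono t; apply/ereal_infP => y [g [g0 gp] <-].
apply: le_trans (gp t); apply: mono; first exact: lfp_ge0.
move=> u; apply: ge_ereal_inf; exists (g u) => //; by exists g.
Qed.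

Lemma wsum_fin d (h : pstate -> R) : wsum d (fun v => (h v)%:E) = (\sum_(x <- d) x.1 * h x.2)%:E.
Proof. by rewrite /wsum -sumEFin; apply: eq_bigr => x _; rewrite EFinM. Qed.

Lemma wsum_add (d : seq (R * pstate)) (h1 h2 : Exp R) : nonnegw d -> (forall t, 0 <= h1 t) -> (forall t, 0 <= h2 t) ->
  wsum d (fun v => h1 v + h2 v) = wsum d h1 + wsum d h2.
Proof.
move=> hd g1 g2; rewrite /wsum -big_split /=.
apply: esum_eq_nn => // x hx; apply: ge0_muleDr; [exact: g1|exact: g2].
Qed.

End Glue.

Local Open Scope ereal_scope.
Theorem theorem6p10 (R : realType) (phi : pred_) (Cb : prog R) (I f : Exp R) :
  loopfree Cb ->
  wf (While phi Cb I) ->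
  (forall s, 0 <= f s) ->
  (forall s, I s <= iv R (phi s) * awp Cb I s + iv R (~~ phi s) * f s) ->
  dPAST (While phi Cb I) ->
  suitable phi Cb I f ->
  forall s, I s <= awp (While phi Cb I) f s.
Proof.
move=> lf [I0 wfb] f0 hsub dp [[I' [I'0 hIdec]] [hf [hIf _]] [b [b0 hb]]].
pose Ir t := fine (I t).
have hI : forall t, I t = (Ir t)%:E by move=> t; rewrite /Ir fineK // ge0_fin_numE.
have Ir0 : forall t, (0 <= Ir t)%R by move=> t; rewrite -lee_fin -hI.
pose Ee := ert (While phi Cb I) (fun _ => 0).
have Ee0 : forall t, 0 <= Ee t by move=> t; exact: lfp_ge0.
pose Er t := fine (Ee t).
have hE : forall t, Ee t = (Er t)%:E.
  by move=> t; rewrite /Er fineK // ge0_fin_numE; [exact: dp|exact: Ee0].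
have Er0 : forall t, (0 <= Er t)%R by move=> t; rewrite -lee_fin -hE.
have [D hD] := choice (@resol R Cb lf wfb I I0).
have Dnn : forall t, all (fun x => 0 <= x.1)%R (D t) by move=> t; case: (hD t).
have Dsum : forall t, (\sum_(x <- D t) x.1 <= 1)%R by move=> t; case: (hD t).
have Dle : forall t h, (forall v, 0 <= h v) -> wsum (D t) h <= awp Cb h t.
  by move=> t; case: (hD t).
have EP : forall t, (1 + Pop R phi D Er t <= Er t)%R.
  move=> t; rewrite -lee_fin EFinD -hE.
  have mono : forall g1 g2 : Exp R, (forall t, 0 <= g1 t) -> (forall t, g1 t <= g2 t) ->
      forall u, 1 + (iv R (~~ phi u) * 0 + iv R (phi u) * ert Cb g1 u) <=
                1 + (iv R (~~ phi u) * 0 + iv R (phi u) * ert Cb g2 u).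
    move=> g1 g2 g10 hle u; apply: leeD => //; apply: leeD => //; apply: lee_pmul => //.
    - exact: iv_ge0.
    - exact: ert_ge0.
    - exact: ert_mono.
  have hpre : 1 + (iv R (~~ phi t) * 0 + iv R (phi t) * ert Cb Ee t) <= Ee t.
    exact: (@lfp_pre R (fun g s => 1 + (iv R (~~ phi s) * 0 + iv R (phi s) * ert Cb g s)) mono t).
  rewrite /Pop; case hp: (phi t) hpre => /= hpre.
    apply: le_trans hpre; apply: leeD => //; rewrite mul0e add0e mul1e -wsum_fin.
    have -> : (fun v => (Er v)%:E) = Ee by apply/funext => v; rewrite hE.
    apply: le_trans (Dle t _ Ee0) _; exact: awp_le_ert.
  by apply: le_trans hpre; rewrite mul1e mul0e !adde0.
move=> s /=; apply/ereal_infP => y [g [g0 gpre] <-].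
pose m t := if g t is r%:E then Num.max 0%R (Ir t - r)%R else 0%R.
have hIfg : forall t, ~~ phi t -> I t <= g t.
  move=> t /negbTE hn; have := gpre t; rewrite /= hn /= mul1e mul0e adde0.
  by rewrite hIdec hn /= mul0e add0e mul1e.
have m0 : forall t, (0 <= m t)%R.
  by move=> t; rewrite /m; case: (g t) => [r| |] //; rewrite le_max lexx.
have mI : forall t, (m t <= Ir t)%R.
  move=> t; rewrite /m; case hg: (g t) => [r| |] //; rewrite ge_max Ir0 /=.
  have : 0 <= g t by exact: g0.
  by rewrite hg lee_fin => hr; rewrite lerBlDr lerDl.
have Pge0 : forall t, (0 <= Pop R phi D m t)%R by move=> t; apply: P_ge0.
have hIgm : forall v, I v <= g v + (m v)%:E.
  move=> v; rewrite /m; case hg: (g v) => [r| |].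
  - by rewrite hI -EFinD lee_fin -lerBlDl le_max lexx orbT.
  - by rewrite addye // leey.
  - by have := g0 v; rewrite hg.
have mP : forall t, (m t <= Pop R phi D m t)%R.
  move=> t; case hp: (phi t).
  - rewrite /m; case hg: (g t) => [r| |] //; rewrite ge_max Pge0 /=.
    rewrite -/m lerBlDl -lee_fin EFinD -hI -hg.
    apply: le_trans (hsub t) _; rewrite hp /= mul1e mul0e adde0.
    case: (hD t) => _ _ <- _.
    apply: le_trans (wsum_le (Dnn t) I0 hIgm) _.
    rewrite (@wsum_add R (D t) g (fun v => (m v)%:E) (Dnn t) g0); last by move=> v; rewrite lee_fin.
    apply: leeD; last by rewrite wsum_fin /Pop hp.
    apply: le_trans (Dle t _ g0) _.
    by have := gpre t; rewrite /= hp /= mul0e add0e mul1e.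
  - rewrite /Pop hp /m; case hg: (g t) => [r| |] //; rewrite ge_max lexx /= subr_le0.
    by have := hIfg t; rewrite hp hg hI lee_fin; apply.
have Ib : forall t, (Pop R phi D (fun v => `|Ir v - Ir t|) t <= b)%R.
  move=> t; rewrite /Pop; case hp: (phi t) => //.
  rewrite -lee_fin -(@wsum_fin R (D t) (fun v => `|Ir v - Ir t|)%R).
  have -> : (fun v => (`|Ir v - Ir t|)%:E) = (fun v => `|I v - I t|).
    by apply/funext => v; rewrite !hI -EFinB abse_EFin.
  apply: le_trans (Dle t _ _) _; first by move=> v; exact: abse_ge0.
  by have := hb t; rewrite hp /= mul1e.
have := @chain_main R pstate phi D Dnn Dsum m Ir Er b m0 mP mI Ir0 Ib Er0 EP s.
rewrite /m; case hg: (g s) => [r| |] /=.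
- move/eqP; rewrite eq_le => /andP[+ _]; rewrite ge_max => /andP[_].
  by rewrite subr_le0 hI lee_fin.
- by rewrite leey.
- by have := g0 s; rewrite hg.
Qed.
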